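(* Let $S$ be a primitive substitution over a finite alphabet $\mathcal{A}$ with linear repetitivity constant $C_S$ and Perron–Frobenius eigenvalue $\theta_S$, let $r\in\mathbb{N}$ and $\omega_0\in\mathcal{A}^{\mathbb{Z}}$. (1) If $n\ge N_1(r):=\frac{\log r}{\log\theta_S}+\frac{\log C_S-\log\check C(S)}{\log\theta_S}$, then $W(\Omega_n(\omega_0))_r\supseteq W(S)_r$. (2) If $\omega_0$ is a good approximant and $n>N_2(r):=\frac{\log r}{\log\theta_S}-\frac{\log(2\check C(S))}{\log\theta_S}+|\mathcal{A}|^2$, then $W(\Omega_n(\omega_0))_r\subseteq W(S)_r$.
   Context: Words are finite strings over $\mathcal{A}$; $u\prec w$ means contiguous subword; $|u|$ is length. A substitution $S:\mathcal{A}\to\mathcal{A}^+$ extends to words and configurations $\omega:\mathbb{Z}\to\mathcal{A}$ by concatenation (with $S(\omega(0))$ starting at $0$); it is primitive if for some $p$, every letter occurs in $S^p(a)$ for every $a$. $\theta_S$ is the Perron–Frobenius eigenvalue of the substitution matrix (entry $(i,j)$ = number of occurrences of $a_i$ in $S(a_j)$). $\check C(S),\hat C(S)>0$ are fixed constants with $\check C(S)\theta_S^n\le|S^n(a)|\le\hat C(S)\theta_S^n$ for all $a\in\mathcal{A}$, $n\in\mathbb{N}$. Legal words $W(S)$: subwords of some $S^n(a)$. $C_S\ge1$ is a linear repetitivity constant: for all $u,w\in W(S)$ with $|w|\ge C_S|u|$, $u\prec w$. For a subshift $\Omega$, $W(\Omega)$ is the set of finite subwords of its elements and $W(\cdot)_r$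 the subset of length-$r$ words. $\Omega_n(\omega_0)$ is the closure of the shift-orbit of $S^n(\omega_0)$. $G(S)$ is the directed graph on $\mathcal{A}^2$ with edge $u\to w$ iff $u,w\notin W(S)$ and $w\prec S(u)$; $\omega_0$ is a good approximant if every directed path in $G(S)$ starting at a length-$2$ subword of $\omega_0$ contains no closed subpath. *)

(* Defs.v *)
From mathcomp Require Import all_boot all_order all_algebra.
From mathcomp Require Import reals exp.
Set Implicit Arguments.
Unset Strict Implicit.
Unset Printing Implicit Defensive.
Import Order.TTheory GRing.Theory Num.Theory.
Local Open Scope ring_scope.

Section SubstDefs.
Variable A : finType.

Definition subst_word (S : A -> seq A) (w : seq A) : seq A := flatten (map S w).
Definition subst_iter (S : A -> seq A) (n : nat) (w : seq A) : seq A :=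
  iter n (subst_word S) w.

Definition legal (S : A -> seq A) (u : seq A) : Prop :=
  exists (n : nat) (a : A), infix u (subst_iter S n [:: a]).

Definition primitive (S : A -> seq A) : Prop :=
  exists p : nat, forall a b : A, b \in subst_iter S p [:: a].

(* theta is the Perron-Frobenius eigenvalue of the substitution matrix
   M_{a,b} = #occurrences of a in S(b): positive eigenvalue with an
   entrywise positive eigenvector (M v = theta v). *)
Definition is_PF_eigenvalue (R : realType) (S : A -> seq A) (theta : R) : Prop :=
  0 < theta /\
  exists v : A -> R, (forall a, 0 < v a) /\
    forall a, \sum_(b : A) (count_mem a (S b))%:R * v b = theta * v a.

Definition lin_rep_const (R : realType) (S : A -> seq A) (C : R) : Prop :=
  forall u w : seq A, legal S u -> legal S w ->
    C * (size u)%:R <= (size w)%:R -> infix u w.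

Definition config := int -> A.

(* S applied to a configuration: S(x 0) starts at position 0, the blocks
   S(x 0) S(x 1) ... fill the nonnegative positions and
   ... S(x (-2)) S(x (-1)) fill the negative positions. (Assumes the images
   of S are nonempty.) *)
Definition subst_config (S : A -> seq A) (x : config) : config :=
  fun m => match m with
  | Posz k => nth (x 0) (subst_word S [seq x (Posz i) | i <- iota 0 k.+1]) k
  | Negz k => nth (x 0)
      (rev (subst_word S [seq x (Negz i) | i <- rev (iota 0 k.+1)])) k
  end.

Definition config_iter (S : A -> seq A) (n : nat) (x : config) : config :=
  iter n (subst_config S) x.

Definition occurs (u : seq A) (y : config) : Prop :=
  exists k : int, forall i : nat, (i < size u)%N -> y (k + i%:Z) = nth (y 0) u i.

(* y belongs to the closure (product topology) of the shift orbit of x *)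
Definition in_orbit_closure (x y : config) : Prop :=
  forall N : nat, exists k : int, forall m : int, `|m| <= N%:Z -> y m = x (m + k).

Definition W_orbit_r (x : config) (r : nat) (u : seq A) : Prop :=
  size u = r /\ exists y : config, in_orbit_closure x y /\ occurs u y.

Definition W_S_r (S : A -> seq A) (r : nat) (u : seq A) : Prop :=
  size u = r /\ legal S u.

Definition G_edge (S : A -> seq A) (u w : A * A) : Prop :=
  ~ legal S [:: u.1; u.2] /\ ~ legal S [:: w.1; w.2] /\
  infix [:: w.1; w.2] (subst_word S [:: u.1; u.2]).

Fixpoint G_path (S : A -> seq A) (v : A * A) (p : seq (A * A)) : Prop :=
  match p with
  | [::] => True
  | w :: p' => G_edge S v w /\ G_path S w p'
  end.

(* good approximant: every directed path starting at a length-2 subword of x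
   has no closed subpath, i.e. visits no vertex twice *)
Definition good_approximant (S : A -> seq A) (x : config) : Prop :=
  forall (v : A * A) (p : seq (A * A)),
    occurs [:: v.1; v.2] x -> G_path S v p -> uniq (v :: p).

End SubstDefs.

(* Main.v *)
Require Import Defs.
From mathcomp Require Import all_boot all_order all_algebra.
From mathcomp Require Import reals exp.
From mathcomp Require Import zify ring lra.
From Stdlib Require Import Classical ClassicalEpsilon.
Import Order.TTheory GRing.Theory Num.Theory.
Set Implicit Arguments.
Unset Strict Implicit.
Unset Printing Implicit Defensive.
Local Open Scope ring_scope.

Section Words.
Variable A : finType.
Variable S : A -> seq A.
Hypothesis Sne : forall a, S a != [::].
Local Notation sw := (subst_word S).
Local Notation si := (subst_iter S).

Lemma sw_cat u v : sw (u ++ v) = sw u ++ sw v.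
Proof. by rewrite /subst_word map_cat flatten_cat. Qed.

Lemma sw_nil : sw [::] = [::]. Proof. by []. Qed.

Lemma size_S a : (0 < size (S a))%N.
Proof. by rewrite lt0n size_eq0 Sne. Qed.

Lemma sw_cons a u : sw (a :: u) = S a ++ sw u. Proof. by []. Qed.

Lemma sw1 a : sw [:: a] = S a. Proof. by rewrite /subst_word /= cats0. Qed.

Lemma size_sw u : (size u <= size (sw u))%N.
Proof.
elim: u => // a u IH; rewrite sw_cons /= size_cat; have := size_S a; lia.
Qed.

Lemma si_S n w : si n.+1 w = sw (si n w). Proof. by []. Qed.

Lemma si_add m n w : si (m + n) w = si m (si n w).
Proof. by rewrite /subst_iter iterD. Qed.

Lemma si_nil n : si n [::] = [::].
Proof. by elim: n => //= n IH; rewrite /subst_iter /= -/(subst_iter S n [::]) IH. Qed.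

Lemma si_cat n u v : si n (u ++ v) = si n u ++ si n v.
Proof.
elim: n => //= n IH; rewrite /subst_iter /= -!/(subst_iter S n _) IH sw_cat //.
Qed.

Lemma si_flat n w : si n w = flatten (map (fun c => si n [:: c]) w).
Proof.
elim: w => [|c w IH]; first by rewrite si_nil.
by rewrite -cat1s si_cat IH.
Qed.

Lemma size_si n w : (size w <= size (si n w))%N.
Proof.
elim: n => // n IH; rewrite si_S; exact: leq_trans IH (size_sw _).
Qed.

Lemma size_si_mono m n w : (m <= n)%N -> (size (si m w) <= size (si n w))%N.
Proof.
move=> h; rewrite -(subnK h) si_add; exact: size_si.
Qed.

Lemma infix_sw u v : infix u v -> infix (sw u) (sw v).
Proof.
move/infixP=> [s [s' ->]]; rewrite !sw_cat; exact: infix_infix.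
Qed.

Lemma infix_si n u v : infix u v -> infix (si n u) (si n v).
Proof.
elim: n => // n IH h; rewrite !si_S; exact: infix_sw (IH h).
Qed.

Lemma legal_infix u v : infix u v -> legal S v -> legal S u.
Proof.
move=> h [n [a hv]]; exists n, a; exact: infix_trans h hv.
Qed.

Lemma legal_si n u : legal S u -> legal S (si n u).
Proof.
move=> [m [a h]]; exists (n + m)%N, a; rewrite si_add; exact: infix_si.
Qed.

Lemma legal_sw u : legal S u -> legal S (sw u).
Proof. by move=> h; have := legal_si 1 h. Qed.


Definition Img (f : A -> seq A) (y z : config A) : Prop :=
  exists pos : int -> int,
    (forall a, pos (a + 1) = pos a + (size (f (y a)))%:Z) /\
    (forall a j d, (j < size (f (y a)))%N -> z (pos a + j%:Z) = nth d (f (y a)) j).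

Lemma Img_id y : Img (fun a => [:: a]) y y.
Proof.
exists id; split => // a j d; case: j => // _; by rewrite addr0.
Qed.

Fixpoint zwin (z : config A) (b : int) (n : nat) : seq A :=
  if n is n'.+1 then z b :: zwin z (b + 1) n' else [::].

Lemma zwin_word (z : config A) b (v : seq A) d :
  (forall j, (j < size v)%N -> z (b + j%:Z) = nth d v j) -> zwin z b (size v) = v.
Proof.
elim: v b => //= c v IH b h; congr cons.
  by have := h 0%N erefl; rewrite addr0.
apply: IH => j hj; have := h j.+1 hj; by rewrite -addrA -[(1 + j%:Z)]PoszD add1n.
Qed.

Lemma Img_comp f g y z w : Img f y z -> Img g z w ->
  Img (fun a => flatten (map g (f a))) y w.
Proof.
move=> [p1 [s1 b1]] [p2 [s2 b2]].
have L1 : forall n b, p2 (b + n%:Z) = p2 b + (size (flatten (map g (zwin z b n))))%:Z.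
  elim=> [|n IH] b; first by rewrite /= !addr0.
  rewrite -[n.+1]add1n PoszD addrA IH s2 /= size_cat PoszD addrA //.
have L2 : forall n b j d, (j < size (flatten (map g (zwin z b n))))%N ->
    w (p2 b + j%:Z) = nth d (flatten (map g (zwin z b n))) j.
  elim=> [|n IH] b j d //=; rewrite size_cat nth_cat => hj.
  case: ltnP => hj2; first exact: b2.
  rewrite -(IH (b + 1) (j - size (g (z b)))%N); last by lia.
  by rewrite s2 -addrA -PoszD subnKC.
have L3 : forall a, zwin z (p1 a) (size (f (y a))) = f (y a).
  by move=> a; apply: (zwin_word (d := y a)) => j hj; apply: b1.
exists (fun a => p2 (p1 a)); split.
  by move=> a; rewrite s1 L1 L3.
move=> a j d hj; rewrite -(L3 a) in hj *; exact: L2.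
Qed.

Section Sub.
Variable y : config A.
Let P k := [seq y (Posz i) | i <- iota 0 k].
Let Nw k := [seq y (Negz i) | i <- rev (iota 0 k)].

Lemma P_add k l : P (k + l) = P k ++ [seq y (Posz i) | i <- iota k l].
Proof. by rewrite /P iotaD map_cat. Qed.
Lemma Nw_add k l : Nw (k + l) = [seq y (Negz i) | i <- rev (iota k l)] ++ Nw k.
Proof. by rewrite /Nw iotaD rev_cat map_cat. Qed.
Lemma size_P k : size (P k) = k. Proof. by rewrite size_map size_iota. Qed.
Lemma size_Nw k : size (Nw k) = k. Proof. by rewrite size_map size_rev size_iota. Qed.

Definition posS (a : int) : int :=
  match a with
  | Posz k => Posz (size (sw (P k)))
  | Negz k => - Posz (size (sw (Nw k.+1)))
  end.

Lemma Img_subst : Img S y (subst_config S y).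
Proof.
exists posS; split.
  case=> k.
    have -> : Posz k + 1 = Posz k.+1 by rewrite -addn1.
    rewrite /= -addn1 P_add sw_cat size_cat /= sw1; lia.
  case: k => [|k].
    have -> : Negz 0 + 1 = 0 by [].
    by rewrite /= sw1 addrC subrr.
  have -> : Negz k.+1 + 1 = Negz k by rewrite !NegzE; lia.
  rewrite /= -[k.+2]addn1 Nw_add sw_cat size_cat /= sw1; lia.
case=> k j d hj.
  set L := size (sw (P k)).
  have hL : (k <= L)%N by rewrite /L -{1}(size_P k) size_sw.
  have -> : posS (Posz k) + j%:Z = Posz (L + j) by rewrite /= PoszD.
  rewrite /subst_config.
  have -> : ((L + j).+1 = k.+1 + (L + j - k))%N by lia.
  rewrite -/(P (k.+1 + (L + j - k))%N) P_add -addn1 P_add sw_cat sw_cat /= sw1 -catA.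
  rewrite nth_cat -/L ltnNge leq_addr /= addKn nth_cat hj.
  exact: set_nth_default.
set L := size (sw (Nw k.+1)).
have hs : L = (size (S (y (Negz k))) + size (sw (Nw k)))%N.
  by rewrite /L -addn1 Nw_add sw_cat size_cat /= sw1.
have hk : (k <= size (sw (Nw k)))%N by rewrite -{1}(size_Nw k) size_sw.
have -> : posS (Negz k) + j%:Z = Negz (L - j - 1)%N by rewrite /= NegzE; lia.
rewrite /subst_config.
have -> : ((L - j - 1).+1 = k.+1 + (L - j - 1 - k))%N by lia.
rewrite -/(Nw (k.+1 + (L - j - 1 - k))%N) Nw_add sw_cat nth_rev; last by rewrite size_cat; lia.
rewrite size_cat.
have -> : (size (sw [seq y (Negz i) | i <- rev (iota k.+1 (L - j - 1 - k))]) + L -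
     (L - j - 1).+1 = size (sw [seq y (Negz i) | i <- rev (iota k.+1 (L - j - 1 - k))]) + j)%N by lia.
rewrite nth_cat ltnNge leq_addr /= addKn.
rewrite -addn1 Nw_add sw_cat /= sw1 nth_cat hj.
exact: set_nth_default.
Qed.
End Sub.

Lemma Img_iter n y : Img (fun a => si n [:: a]) y (config_iter S n y).
Proof.
elim: n => [|n IH]; first exact: Img_id.
exact: (Img_comp IH (Img_subst _)).
Qed.

Lemma occurs_d u (z : config A) : occurs u z ->
  exists k : int, forall i d, (i < size u)%N -> z (k + i%:Z) = nth d u i.
Proof.
move=> [k h]; exists k => i d hi; rewrite h //; exact: set_nth_default.
Qed.

Lemma occurs_infix u v (z : config A) : occurs v z -> infix u v -> occurs u z.
Proof.
move=> /occurs_d [k h] /infixP [s [s' ev]].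
exists (k + (size s)%:Z) => i hi.
rewrite -addrA -PoszD (h _ (nth (z 0) u i)); last first. by rewrite ev !size_cat ltn_add2l ltn_addr.
rewrite ev nth_cat ltnNge leq_addr /= addKn nth_cat hi; exact: set_nth_default.
Qed.

Lemma Img_block f y z a : Img f y z -> occurs (f (y a)) z.
Proof. move=> [p [_ b]]; exists (p a) => i hi; exact: b. Qed.

Lemma closure_occurs (x y : config A) u :
  in_orbit_closure x y -> occurs u y -> occurs u x.
Proof.
move=> hc /occurs_d [k h].
have [s hs] := hc (`|k|%N + size u)%N.
exists (k + s) => i hi.
have -> : k + s + i%:Z = (k + i%:Z) + s by rewrite addrAC.
rewrite -hs; first exact: h.
lia.
Qed.

Lemma OCC f y z u : Img f y z -> (forall a, (0 < size (f a))%N) -> occurs u z ->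
  (forall a, (size u <= (size (f a)).+1)%N) ->
  exists a, infix u (f (y a) ++ f (y (a + 1))).
Proof.
move=> [pos [st bl]] fne /occurs_d [k hk] hsz.
have low : forall t : nat, pos (- t%:Z) <= pos 0 - t%:Z.
  elim=> [|t IH]; first by rewrite oppr0 subr0.
  have := st (- (t.+1)%:Z); have -> : - (t.+1)%:Z + 1 = - t%:Z by rewrite -addn1 PoszD; lia.
  have := fne (y (- (t.+1)%:Z)); move: IH; lia.
have up : forall n : nat, forall b, pos b <= k -> k < pos b + n%:Z ->
    exists a, pos a <= k < pos (a + 1).
  elim=> [|n IH] b h1 h2; first by move: h1 h2; lia.
  case: (ltP k (pos (b + 1))) => h3; first by exists b; rewrite h1 h3.
  apply: (IH (b + 1)) => //; move: h2; rewrite st; have := fne (y b); lia.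
have [a /andP [ha1 ha2]] : exists a, pos a <= k < pos (a + 1).
  pose t := `|k - pos 0%R|%N.
  have h1 : pos (- t%:Z) <= k.
    apply: (le_trans (low t)). rewrite /t abszE. lia.
  apply: (up (`|k - pos (- t%:Z)|%N.+1) (- t%:Z) h1); lia.
exists a.
set fa := f (y a); set fb := f (y (a + 1)).
set o := `|k - pos a|%N.
have ho : k = pos a + o%:Z by rewrite /o abszE; lia.
clearbody o.
have hoa : (o < size fa)%N.
  move: ha2; rewrite st -/fa; lia.
have hub := hsz (y (a + 1)); rewrite -/fb in hub.
set W := fa ++ fb.
have -> : u = take (size u) (drop o W).
  apply: (@eq_from_nth _ (y a)).
    rewrite size_takel // size_drop /W size_cat; lia.
  move=> i hi; rewrite nth_take // nth_drop -(hk i (y a) hi) ho -addrA -PoszD.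
  rewrite /W nth_cat; case: ltnP => h. exact: (bl a (o+i)%N (y a) h).
  have -> : Posz (o + i) = Posz (size fa) + Posz (o + i - size fa)%N by rewrite -PoszD subnKC.
  rewrite addrA -st; apply: (bl (a + 1) (o + i - size fa)%N (y a)).
  rewrite -/fb; lia.
rewrite -{2}(cat_take_drop o W) -{2}(cat_take_drop (size u) (drop o W)).
exact: infix_infix.
Qed.

Lemma size1_eq (s : seq A) d : size s = 1%N -> s = [:: head d s].
Proof. by case: s => // c [|]. Qed.

Section Comb.
Hypothesis grow : exists t, forall c, (2 <= size (si t [:: c]))%N.

Lemma singletons_grow a : (2 <= size (si #|A| [:: a]))%N.
Proof.
rewrite leqNgt; apply/negP => hlt.
have s1 : forall j, (j <= #|A|)%N -> size (si j [:: a]) = 1%N.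
  move=> j hj; have := size_si j [:: a]; have := size_si_mono [:: a] hj; move: hlt => /=; lia.
pose g j := head a (si j [:: a]).
have hg : forall j, (j <= #|A|)%N -> si j [:: a] = [:: g j].
  by move=> j hj; apply: size1_eq; apply: s1.
pose s := map g (iota 0 #|A|.+1).
have : ~~ uniq s.
  apply/negP => /card_uniqP hc; have := max_card (mem s).
  by rewrite hc size_map size_iota ltnn.
move=> /(uniqPn a) [i [j [hij hj]]].
rewrite !size_map size_iota in hj.
rewrite !(nth_map 0%N) ?size_iota //; last by lia.
rewrite !nth_iota ?add0n //; last by lia.
move=> gij.
set c := g i.
have hc : si (j - i) [:: c] = [:: c].
  rewrite -hg; last by lia.
  by rewrite -si_add subnK ?hg -?gij //; lia.
have hct : forall t, si ((j - i) * t) [:: c] = [:: c].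
  elim=> [|t IH]; first by rewrite muln0.
  by rewrite mulnS si_add IH hc.
have [t0 ht0] := grow.
have := ht0 c; have := size_si_mono [:: c] (leq_pmull t0 (_ : (0 < j - i)%N)).
rewrite hct /=; lia.
Qed.

Hypothesis prim : primitive S.

Lemma letter_legal a : legal S [:: a].
Proof.
have [p hp] := prim; exists p, a.
have := hp a a; case/splitPr => s1 s2; rewrite -cat1s; exact: infix_infix.
Qed.

Lemma succ_legal (a0 a : A) : exists b, legal S [:: a; b].
Proof.
have [p hp] := prim; have [t ht] := grow.
have := ht a0; case E: (si t [:: a0]) => [|c1 [|c2 rest]] //= _.
have [s1 [s2 Hs]] : exists s1 s2, si p [:: c1] = s1 ++ a :: s2.
  by move: (hp c1 a); case/splitPr => s1 s2; exists s1, s2.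
case E2: (si p [:: c2]) => [|b tl].
  by move: (size_si p [:: c2]); rewrite E2.
have [e [tl' He]] : exists e tl', s2 ++ b :: tl = e :: tl'.
  by case: (s2) => [|e s3]; [exists b, tl | exists e, (s3 ++ b :: tl)].
exists e, (p + t)%N, a0.
rewrite si_add E si_flat /= Hs E2 -catA /= -[b :: tl ++ _]cat_cons catA He.
exact: (infix_infix s1 [:: a; e] (tl' ++ _)).
Qed.

End Comb.

Lemma G_path_rcons v p w : G_path S v p -> G_edge S (last v p) w -> G_path S v (rcons p w).
Proof.
elim: p v => [|u p IH] v /=; first by move=> _ h; split.
by move=> [h1 h2] h3; split => //; apply: IH.
Qed.

Lemma G_path_illegal v p : G_path S v p -> ~ legal S [:: (last v p).1; (last v p).2] ->
  forall e, e \in v :: p -> ~ legal S [:: e.1; e.2].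
Proof.
elim: p v => [|w p IH] v /=.
  by move=> _ h e; rewrite inE => /eqP ->.
move=> [[h1 [h2 h3]] hp] hl e; rewrite inE => /orP [/eqP -> //|].
exact: IH.
Qed.

Lemma path_back (x : config A) j w1 w2 :
  occurs [:: w1; w2] (config_iter S j x) -> ~ legal S [:: w1; w2] ->
  exists v p, occurs [:: v.1; v.2] x /\ G_path S v p /\ size p = j /\ last v p = (w1, w2).
Proof.
elim: j w1 w2 => [|j IH] w1 w2 ho hl; first by exists (w1, w2), [::].
have hs : forall a, (size [:: w1; w2] <= (size (S a)).+1)%N.
  by move=> a; rewrite /= ltnS size_S.
have [a ha] := OCC (Img_subst (config_iter S j x)) size_S ho hs.
set c := config_iter S j x a in ha; set d := config_iter S j x (a + 1) in ha.
case: (classic (legal S [:: c; d])) => hcd.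
  exfalso; apply: hl; apply: legal_infix ha _.
  by have := legal_sw hcd; rewrite sw_cons sw1.
have hocc : occurs [:: c; d] (config_iter S j x).
  exists a; move=> [|[|i]] //= _; by rewrite ?addr0.
have [v [p [h1 [h2 [h3 h4]]]]] := IH c d hocc hcd.
exists v, (rcons p (w1, w2)); split => //; split.
  apply: G_path_rcons => //; rewrite h4; split => //; split => //.
  by rewrite /= sw_cons sw1.
by rewrite size_rcons h3 last_rcons.
Qed.

Lemma occurs2 (z : config A) a : occurs [:: z a; z (a + 1)] z.
Proof. exists a; move=> [|[|i]] // _; by rewrite ?addr0. Qed.

Lemma narith (n : nat) : ((n * n - n).+1 + n <= n * n)%N -> False.
Proof. have : (n <= n * n)%N by case: n => // n; rewrite leq_pmulr. lia. Qed.

Lemma two_legal (x : config A) : good_approximant S x ->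
  (exists t, forall c, (2 <= size (si t [:: c]))%N) -> primitive S ->
  forall K, K = (#|A| * #|A| - #|A|)%N ->
  forall w1 w2, occurs [:: w1; w2] (config_iter S K x) ->
  legal S [:: w1; w2].
Proof.
move=> ga grow prim K hK w1 w2 ho; subst K; apply: NNPP => hl.
have [v [p [h1 [h2 [h3 h4]]]]] := path_back ho hl.
have hu := ga v p h1 h2.
have hill := G_path_illegal h2 (ltac:(by rewrite h4)).
pose sf a : {b | legal S [:: a; b]} :=
  constructive_indefinite_description _ (succ_legal grow prim a a).
pose T := [seq (a, sval (sf a)) | a <- enum A].
have uT : uniq T.
  rewrite map_inj_uniq ?enum_uniq // => a b /(congr1 fst) //.
have uall : uniq ((v :: p) ++ T).
  rewrite cat_uniq hu uT andbT; apply/hasPn => e /mapP [a _ ->].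
  apply/negP => hin; exact: (hill _ hin (svalP (sf a))).
have := max_card (mem ((v :: p) ++ T)).
rewrite (card_uniqP uall) size_cat /= h3 size_map -cardE card_prod.
exact: narith.
Qed.

End Words.

Lemma sum_bound (R : realType) (A : finType) (B : R) (h : A -> seq A) (w : seq A) :
  (forall c, B <= (size (h c))%:R) ->
  (size w)%:R * B <= (size (flatten (map h w)))%:R.
Proof.
move=> hb; elim: w => [|c w IH]; first by rewrite mul0r.
rewrite /= size_cat natrD -addn1 natrD mulrDl mul1r.
have := hb c; lra.
Qed.

Lemma narith2 (n s : nat) : (s * s < n)%N -> n = ((n - s * s) + s + (s * s - s))%N.
Proof. have : (s <= s * s)%N by case: s => // k; rewrite leq_pmulr. lia. Qed.

Theorem mainTheorem4 (R : realType) (A : finType) (S : A -> seq A)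
    (theta Cchk Chat CS : R) (r : nat) (x : config A) :
  (forall a : A, S a != [::]) ->
  primitive S ->
  is_PF_eigenvalue S theta ->
  1 < theta ->
  0 < Cchk -> 0 < Chat ->
  (forall (a : A) (n : nat),
      Cchk * theta ^+ n <= (size (subst_iter S n [:: a]))%:R <= Chat * theta ^+ n) ->
  1 <= CS -> lin_rep_const S CS ->
  (forall n : nat,
      ln (r%:R : R) / ln theta + (ln CS - ln Cchk) / ln theta <= n%:R ->
      forall u : seq A, W_S_r S r u -> W_orbit_r (config_iter S n x) r u) /\
  (good_approximant S x ->
   forall n : nat,
      ln (r%:R : R) / ln theta - ln (2 * Cchk) / ln theta + (#|A| ^ 2)%:R < n%:R ->
      forall u : seq A, W_orbit_r (config_iter S n x) r u -> W_S_r S r u).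
Proof.
move=> Sne prim [thpos _] th1 C0 Chat0 hsz CS1 lrep.
have C1 : Cchk <= 1.
  by have := hsz (x 0) 0%N; rewrite expr0 mulr1 /= => /andP [].
have hl : 0 < ln theta := ln_gt0 th1.
have hlow : forall a n, Cchk * theta ^+ n <= (size (subst_iter S n [:: a]))%:R.
  by move=> a n; case/andP: (hsz a n).
have grow : exists t, forall c, (2 <= size (subst_iter S t [:: c]))%N.
  set q := - ln Cchk / ln theta.
  have q0 : 0 <= q.
    by apply: divr_ge0; [rewrite oppr_ge0; exact: ln_le0 | exact: ltW].
  exists (Num.bound q) => c.
  have hq := archi_boundP q0.
  have h1 : 1 < Cchk * theta ^+ (Num.bound q).
    rewrite -(ltr_ln (x := 1)) ?posrE ?mulr_gt0 ?exprn_gt0 // ln1.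
    rewrite lnM ?posrE ?exprn_gt0 // lnXn // -mulr_natl.
    move: hq; rewrite /q ltr_pdivrMr //; lra.
  have := lt_le_trans h1 (hlow c _); rewrite -[1]/(1%:R) ltr_nat; exact.
split.
  move=> n hn u [hu hleg]; split => //; exists (config_iter S n x); split.
    by move=> N; exists 0 => m _; rewrite addr0.
  apply: (occurs_infix (Img_block 0 (Img_iter Sne n x))).
  apply: lrep => //; first by exists n, (x 0); exact: infix_refl.
  rewrite hu; apply: le_trans (hlow (x 0) n).
  case: r hu hn => [|r'] hu hn.
    by rewrite mulr0 mulr_ge0 ?ltW ?exprn_gt0.
  have rr0 : 0 < (r'.+1)%:R :> R by rewrite ltr0n.
  have CS0 : 0 < CS by apply: lt_le_trans CS1.
  rewrite -ler_ln ?posrE ?mulr_gt0 ?exprn_gt0 //.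
  rewrite lnM ?posrE ?exprn_gt0 // lnM ?posrE ?exprn_gt0 // lnXn // -[ln theta *+ n]mulr_natl.
  move: hn; rewrite -mulrDl ler_pdivrMr //; lra.
move=> ga n hn u [hu [y [hcl hocc]]]; split => //.
have hoz := closure_occurs hcl hocc.
case: r hu hn => [|[|r']] hu hn.
- move/size0nil: hu => ->; exists 0%N, (x 0); exact: infix0s.
- by case: u hu {hoz hocc} => [|b [|]] // _; apply: letter_legal.
set rr := (r'.+2)%:R : R.
have rr0 : 0 < rr by rewrite ltr0n.
have C20 : 0 < 2 * Cchk by rewrite mulr_gt0.
have hlr : ln (2 * Cchk) <= ln rr.
  rewrite ler_ln ?posrE //; apply: (le_trans (y := 2)); first lra.
  by rewrite /rr -[2]/(2%:R) ler_nat.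
have D0 : 0 <= (ln rr - ln (2 * Cchk)) / ln theta.
  by apply: divr_ge0; [rewrite subr_ge0 | exact: ltW].
move: hn; rewrite -mulrBl => hn.
have hK : (#|A| ^ 2 < n)%N by rewrite -(ltr_nat R); lra.
set m0 := (n - #|A| ^ 2)%N.
have hm0 : m0%:R = n%:R - (#|A| ^ 2)%:R :> R by rewrite natrB // ltnW.
have key : rr < 2 * Cchk * theta ^+ m0.
  rewrite -ltr_ln ?posrE ?mulr_gt0 ?exprn_gt0 //.
  rewrite lnM ?posrE ?exprn_gt0 // lnXn // -[ln theta *+ m0]mulr_natl.
  have : (ln rr - ln (2 * Cchk)) / ln theta < m0%:R by rewrite hm0; lra.
  rewrite ltr_pdivrMr //; lra.
set M := (m0 + #|A|)%N.
have hbig : forall a, (size u <= (size (subst_iter S M [:: a])).+1)%N.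
  move=> a; rewrite hu; apply: (leq_trans _ (leqnSn _)); apply: ltnW.
  rewrite -(ltr_nat R) -/rr.
  apply: (lt_le_trans key).
  rewrite /M si_add si_flat.
  apply: le_trans (sum_bound _ (hlow^~ m0)).
  have := singletons_grow Sne grow a; rewrite -(ler_nat R) => h2.
  rewrite -mulrA; apply: ler_wpM2r h2; apply: mulr_ge0; [exact: ltW | by rewrite exprn_ge0 // ltW].
have [K hKd] : exists K : nat, K = (#|A| * #|A| - #|A|)%N by exists (#|A| * #|A| - #|A|)%N.
have hz : config_iter S n x = config_iter S M (config_iter S K x).
  rewrite /config_iter -iterD; congr iter; rewrite /M hKd /m0.
  move: hK; rewrite expnS expn1; exact: narith2.
rewrite hz in hoz.
clear hz; clearbody M.
have fne : forall a, (0 < size (subst_iter S M [:: a]))%N.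
  by move=> a; apply: (leq_trans _ (size_si _ _ _)).
have [a ha] := OCC (Img_iter Sne M (config_iter S K x)) fne hoz hbig.
set c := config_iter S K x a in ha; set d := config_iter S K x (a + 1) in ha.
have hcd : legal S [:: c; d] := two_legal Sne ga grow prim hKd (occurs2 _ a).
apply: (legal_infix ha); rewrite -si_cat; exact: legal_si.
Qed.
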